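(* Let \(m\) be a positive integer that is not a perfect square, and let \(a,b,c\) be positive integers with \(\gcd(a,b^2-c^2m)=1\). Then \[Frob(a,\,b+c\sqrt m)=(a-1)(b+c\sqrt m-1)(1+\sqrt m)+\mathbb N[\sqrt m].\]
   Context: \(\mathbb N\) denotes the set of non-negative integers. \(\mathbb Z[\sqrt m]=\{u+v\sqrt m\mid u,v\in\mathbb Z\}\) and \(\mathbb N[\sqrt m]=\{u+v\sqrt m\mid u,v\in\mathbb N\}\). For \(\alpha_1,\alpha_2\in\mathbb Z[\sqrt m]\), \(SG(\alpha_1,\alpha_2)=\{\lambda_1\alpha_1+\lambda_2\alpha_2\mid \lambda_1,\lambda_2\in\mathbb N[\sqrt m]\}\) and \(Frob(\alpha_1,\alpha_2)=\{w\in\mathbb Z[\sqrt m]\mid w+\mathbb N[\sqrt m]\subseteq SG(\alpha_1,\alpha_2)\}\). *)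

(* Defs.v *)
(* Elements u + v*sqrt m of Z[sqrt m] are represented by
   pairs (u, v) : Z * Z; this is faithful since m is not a perfect square,
   so the representation is unique. *)
From Stdlib Require Import ZArith.
Open Scope Z_scope.

Definition zsqrt : Type := (Z * Z)%type.

Definition zs_of (u : Z) : zsqrt := (u, 0).

Definition zs_add (x y : zsqrt) : zsqrt := (fst x + fst y, snd x + snd y).

Definition zs_mul (m : Z) (x y : zsqrt) : zsqrt :=
  (fst x * fst y + m * snd x * snd y, fst x * snd y + snd x * fst y).

Definition in_Nsqrt (x : zsqrt) : Prop := 0 <= fst x /\ 0 <= snd x.

Definition SG (m : Z) (a1 a2 : zsqrt) (x : zsqrt) : Prop :=
  exists l1 l2 : zsqrt, in_Nsqrt l1 /\ in_Nsqrt l2 /\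
    x = zs_add (zs_mul m l1 a1) (zs_mul m l2 a2).

Definition Frob (m : Z) (a1 a2 : zsqrt) (w : zsqrt) : Prop :=
  forall n : zsqrt, in_Nsqrt n -> SG m a1 a2 (zs_add w n).

(* Main.v *)
Require Import Defs.
From Stdlib Require Import ZArith Lia.
Open Scope Z_scope.

Lemma key m a b c X Y : 0 < m -> 0 < a -> 0 < b -> 0 < c ->
  Z.gcd a (b * b - c * c * m) = 1 ->
  SG m (zs_of a) (b, c) (X, Y) -> (a | X + b + c * m) -> (a | Y + c + b) ->
  (a - 1) * (b + c * m) <= X /\ (a - 1) * (b + c) <= Y.
Proof.
  intros Hm Ha Hb Hc Hg [[p q] [[s t] [[Hp Hq] [[Hs Ht] E]]]] [z1 Hz1] [z2 Hz2].
  unfold zs_add, zs_mul, zs_of in E; simpl in *.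
  injection E as E1 E2.
  assert (F1 : (s+1)*b + (t+1)*(c*m) = (z1 - p)*a) by lia.
  assert (F2 : (s+1)*c + (t+1)*b = (z2 - q)*a) by lia.
  assert (D1 : (a | (b*b - c*c*m) * (s+1))).
  { exists (b*(z1-p) - c*m*(z2-q)).
    transitivity (b*((s+1)*b + (t+1)*(c*m)) - c*m*((s+1)*c + (t+1)*b)); [ring|].
    rewrite F1, F2; ring. }
  assert (D2 : (a | (b*b - c*c*m) * (t+1))).
  { exists (b*(z2-q) - c*(z1-p)).
    transitivity (b*((s+1)*c + (t+1)*b) - c*((s+1)*b + (t+1)*(c*m))); [ring|].
    rewrite F1, F2; ring. }
  apply Z.gauss in D1; [|exact Hg]. apply Z.gauss in D2; [|exact Hg].
  destruct D1 as [u Hu]; destruct D2 as [v Hv].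
  assert (1 <= u) by nia. assert (1 <= v) by nia.
  assert (a - 1 <= s) by nia. assert (a - 1 <= t) by nia.
  assert ((a-1)*b <= s*b) by (apply Z.mul_le_mono_nonneg_r; lia).
  assert ((a-1)*(c*m) <= t*(c*m)) by (apply Z.mul_le_mono_nonneg_r; nia).
  assert ((a-1)*c <= s*c) by (apply Z.mul_le_mono_nonneg_r; lia).
  assert ((a-1)*b <= t*b) by (apply Z.mul_le_mono_nonneg_r; lia).
  assert (0 <= p*a) by nia. assert (0 <= q*a) by nia.
  split; nia.
Qed.

Lemma memb m a b c X Y : 0 < m -> 0 < a -> 0 < b -> 0 < c ->
  Z.gcd a (b * b - c * c * m) = 1 ->
  (a - 1) * (b - 1 + c * m) <= X -> (a - 1) * (b - 1 + c) <= Y ->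
  SG m (zs_of a) (b, c) (X, Y).
Proof.
  intros Hm Ha Hb Hc Hg HX HY.
  destruct (Z.gcd_bezout _ _ _ Hg) as [f [e H]].
  set (E1 := e*(b*X - c*m*Y)). set (E2 := e*(b*Y - c*X)).
  set (s := E1 mod a). set (t := E2 mod a).
  set (k1 := E1 / a). set (k2 := E2 / a).
  assert (Hs : s = E1 - a*k1) by (apply Z.mod_eq; lia).
  assert (Ht : t = E2 - a*k2) by (apply Z.mod_eq; lia).
  assert (Bs : 0 <= s < a) by (apply Z.mod_pos_bound; lia).
  assert (Bt : 0 <= t < a) by (apply Z.mod_pos_bound; lia).
  set (p := X*f + k1*b + k2*c*m). set (q := Y*f + k1*c + k2*b).
  assert (P : p*a = X - s*b - t*c*m).
  { assert (Hz : p*a - (X - s*b - t*c*m) = X*((f*a + e*(b*b-c*c*m)) - 1)).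
    { rewrite Hs, Ht. unfold p, E1, E2. ring. }
    rewrite H in Hz. lia. }
  assert (Q : q*a = Y - s*c - t*b).
  { assert (Hz : q*a - (Y - s*c - t*b) = Y*((f*a + e*(b*b-c*c*m)) - 1)).
    { rewrite Hs, Ht. unfold q, E1, E2. ring. }
    rewrite H in Hz. lia. }
  assert (s*b <= (a-1)*b) by (apply Z.mul_le_mono_nonneg_r; lia).
  assert (t*(c*m) <= (a-1)*(c*m)) by (apply Z.mul_le_mono_nonneg_r; nia).
  assert (s*c <= (a-1)*c) by (apply Z.mul_le_mono_nonneg_r; lia).
  assert (t*b <= (a-1)*b) by (apply Z.mul_le_mono_nonneg_r; lia).
  assert (Pa : p*a > -a) by lia. assert (Qa : q*a > -a) by lia.
  assert (0 <= p) by (clear - Pa Ha; nia). assert (0 <= q) by (clear - Qa Ha; nia).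
  exists (p, q), (s, t). unfold in_Nsqrt, zs_add, zs_mul, zs_of; simpl.
  split; [lia|]. split; [lia|]. f_equal; lia.
Qed.

Theorem theorem2 (m a b c : Z) :
  0 < m -> ~ (exists k : Z, m = k * k) ->
  0 < a -> 0 < b -> 0 < c ->
  Z.gcd a (b * b - c * c * m) = 1 ->
  forall w : zsqrt,
    Frob m (zs_of a) (b, c) w <->
    exists n : zsqrt, in_Nsqrt n /\
      w = zs_add (zs_mul m (zs_mul m (zs_of (a - 1)) (b - 1, c)) (1, 1)) n.
Proof.
  intros Hm _ Ha Hb Hc Hg [w1 w2].
  unfold zs_add, zs_mul, zs_of; simpl.
  split.
  - intros HF.
    assert (C1 : (a-1)*(b-1+c*m) <= w1).
    { destruct (Z_le_gt_dec ((a-1)*(b-1+c*m)) w1) as [h|h]; [exact h|exfalso].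
      set (Y := (a-1)*(b+c) + a*Z.abs w2).
      assert (0 <= (a-1)*(b+c)) by nia.
      assert (Z.abs w2 <= a*Z.abs w2) by nia.
      specialize (HF ((a-1)*(b-1+c*m) - 1 - w1, Y - w2)).
      unfold in_Nsqrt, zs_add in HF; simpl in HF.
      assert (HS : SG m (zs_of a) (b, c) ((a-1)*(b-1+c*m) - 1, Y)).
      { replace ((a-1)*(b-1+c*m) - 1, Y) with
          (w1 + ((a-1)*(b-1+c*m) - 1 - w1), w2 + (Y - w2)) by (f_equal; ring).
        apply HF. lia. }
      apply key in HS; try assumption.
      + nia.
      + exists (b - 1 + c*m). ring.
      + exists (b + c + Z.abs w2). unfold Y. ring. }
    assert (C2 : (a-1)*(b-1+c) <= w2).
    { destruct (Z_le_gt_dec ((a-1)*(b-1+c)) w2) as [h|h]; [exact h|exfalso].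
      set (X := (a-1)*(b+c*m) + a*Z.abs w1).
      assert (0 <= (a-1)*(b+c*m)) by nia.
      assert (Z.abs w1 <= a*Z.abs w1) by nia.
      specialize (HF (X - w1, (a-1)*(b-1+c) - 1 - w2)).
      unfold in_Nsqrt, zs_add in HF; simpl in HF.
      assert (HS : SG m (zs_of a) (b, c) (X, (a-1)*(b-1+c) - 1)).
      { replace (X, (a-1)*(b-1+c) - 1) with
          (w1 + (X - w1), w2 + ((a-1)*(b-1+c) - 1 - w2)) by (f_equal; ring).
        apply HF. lia. }
      apply key in HS; try assumption.
      + nia.
      + exists (b + c*m + Z.abs w1). unfold X. ring.
      + exists (b - 1 + c). ring. }
    exists (w1 - ((a-1)*(b-1+c*m)), w2 - ((a-1)*(b-1+c))).
    unfold in_Nsqrt; simpl. split; [lia|]. f_equal; ring.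
  - intros [[n1 n2] [[H1 H2] E]]. injection E as E1 E2.
    intros [k1 k2] [K1 K2]. unfold zs_add; simpl.
    simpl in *. apply memb; try assumption; subst; lia.
Qed.
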